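(* Let $n\ge 3$ and w.l.o.g. $n$ odd, let $R=\{x_1,\dots,x_n\}$ with $x_i\in[0,B]$ for $B\in\mathbb{R}$, and $m=\frac{n+1}{2}$ so that $x_{(m)}=\mathrm{median}(R)$ (where $x_{(1)}\le\dots\le x_{(n)}$ are the sorted values). Then $$\mathrm{RS}_{\mathrm{median}}(R)=\tfrac12\max\{x_{(m+1)}-x_{(m)},\,x_{(m)}-x_{(m-1)}\}.$$
   Context: For a finite multiset of reals with sorted values $x_{(1)}\le\dots\le x_{(k)}$, $\mathrm{median}=x_{(\lceil k/2\rceil)}$ for odd $k$ and $\frac{x_{(k/2)}+x_{(k/2+1)}}{2}$ for even $k$. The retain sensitivity is $\mathrm{RS}_{\mathrm{median}}(R)=\max_{x\in[0,B]}|\mathrm{median}(R\cup\{x\})-\mathrm{median}(R)|$. *)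

(* Defs.v *)
From HB Require Import structures.
From mathcomp Require Import all_boot all_order all_algebra.
From mathcomp Require Import classical_sets reals.
Set Implicit Arguments. Unset Strict Implicit. Unset Printing Implicit Defensive.
Import Order.TTheory GRing.Theory Num.Theory.
Local Open Scope ring_scope.
Local Open Scope classical_set_scope.

(* sorted values x_(1) <= ... <= x_(k) of a finite multiset (a seq);
   [order_stat s i] is x_(i) (1-indexed). *)
Definition order_stat (R : realType) (s : seq R) (i : nat) : R :=
  nth 0 (sort <=%R s) i.-1.

Definition median (R : realType) (s : seq R) : R :=
  let k := size s in
  if odd k then order_stat s (uphalf k)
  else (order_stat s k./2 + order_stat s k./2.+1) / 2.

(* retain sensitivity: max over x in [0,B] of |median(R ∪ {x}) - median(R)|,
   expressed as the supremum of the set of these values *)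
Definition RS_median (R : realType) (B : R) (s : seq R) : R :=
  sup [set `|median (x :: s) - median s| | x in [set x : R | 0 <= x <= B]].

(* Main.v *)
Require Import Defs.
From HB Require Import structures.
From mathcomp Require Import all_boot all_order all_algebra.
From mathcomp Require Import classical_sets reals.
From mathcomp Require Import lra zify.
Import Order.TTheory GRing.Theory Num.Theory.
Local Open Scope ring_scope.

Section Aux.
Variable R : realType.

Fixpoint ins (x : R) (t : seq R) : seq R :=
  if t is y :: t' then (if x <= y then x :: y :: t' else y :: ins x t')
  else [:: x].

Lemma ins_path x t a : path <=%R a t -> a <= x -> path <=%R a (ins x t).
Proof.
elim: t a => [|y t IH] a /=; first by move=> _ ->.
move=> /andP[ay pyt] ax; case: ifP => xy /=.
  by rewrite ax xy pyt.
rewrite ay /=; apply: IH => //.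
by move/negbT: xy; rewrite -ltNge => /ltW.
Qed.

Lemma ins_sorted x t : sorted <=%R t -> sorted <=%R (ins x t).
Proof.
case: t => [|y t] //= pyt; case: ifP => xy /=; first by rewrite xy pyt.
apply: ins_path => //.
by move/negbT: xy; rewrite -ltNge => /ltW.
Qed.

Lemma ins_perm x t : perm_eq (ins x t) (x :: t).
Proof.
elim: t => [|y t IH] //=; case: ifP => _ //.
have h : perm_eq (y :: x :: t) (x :: y :: t) by rewrite (perm_catCA [:: y] [:: x] t).
by apply: perm_trans h; rewrite perm_cons.
Qed.

Lemma ins_split x t : exists2 i, (i <= size t)%N &
  ins x t = take i t ++ x :: drop i t.
Proof.
elim: t => [|y t [i hi IH]] /=; first by exists 0%N.
case: ifP => _; first by exists 0%N; rewrite ?take0 ?drop0.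
by exists i.+1 => //; rewrite IH.
Qed.

Lemma sort_cons x s : sort <=%R (x :: s) = ins x (sort <=%R s).
Proof.
have -> : sort <=%R (x :: s) = sort <=%R (x :: sort <=%R s).
  apply/perm_sort_leP; rewrite perm_cons perm_sym; exact: permEl (perm_sort _ _).
rewrite -(sort_le_id (ins_sorted x _ (sort_sorted (@le_total _ R) s))).
apply/perm_sort_leP; rewrite perm_sym; exact: ins_perm.
Qed.

Definition clamp (a b x : R) := Num.max a (Num.min x b).

Lemma cl1 a b x : x <= a -> a <= b -> clamp a b x = a.
Proof. by move=> xa ab; rewrite /clamp min_l ?max_l //; apply: le_trans ab. Qed.
Lemma cl2 a b x : a <= x -> x <= b -> clamp a b x = x.
Proof. by move=> ax xb; rewrite /clamp min_l ?max_r. Qed.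
Lemma cl3 a b x : b <= x -> a <= b -> clamp a b x = b.
Proof. by move=> bx ab; rewrite /clamp min_r ?max_r. Qed.

Lemma clamp_ge a b x : a <= clamp a b x.
Proof. by rewrite /clamp le_max lexx. Qed.
Lemma clamp_le a b x : a <= b -> clamp a b x <= b.
Proof. by move=> ab; rewrite /clamp ge_max ab ge_min lexx orbT. Qed.

Lemma med_ins (t : seq R) k x : sorted <=%R t -> size t = k.*2.+1 -> (0 < k)%N ->
  nth 0 (ins x t) k + nth 0 (ins x t) k.+1 =
  clamp (nth 0 t k.-1) (nth 0 t k.+1) x + nth 0 t k.
Proof.
move=> st szt k0.
have su := ins_sorted x _ st.
have szu : size (ins x t) = k.*2.+2.
  by rewrite (perm_size (ins_perm x t)) /= szt.
have hu a b : (a <= b)%N -> (b < k.*2.+2)%N -> nth 0 (ins x t) a <= nth 0 (ins x t) b.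
  move=> ab bs; apply: (sorted_leq_nth le_trans le_refl) => //;
  rewrite inE szu //; exact: leq_ltn_trans bs.
have ht a b : (a <= b)%N -> (b < k.*2.+1)%N -> nth 0 t a <= nth 0 t b.
  move=> ab bs; apply: (sorted_leq_nth le_trans le_refl) => //;
  rewrite inE szt //; exact: leq_ltn_trans bs.
have [i hi E] := ins_split x t.
have nthu j : nth 0 (ins x t) j =
   if (j < i)%N then nth 0 t j else if j == i then x else nth 0 t j.-1.
  rewrite E nth_cat size_take.
  have -> : (if (i < size t)%N then i else size t) = i.
    by case: ltnP => // h; apply/eqP; rewrite eqn_leq hi h.
  case: ltnP => ji; first by rewrite nth_take.
  case: eqP => [->|/eqP jn]; first by rewrite subnn.
  have : (i < j)%N by rewrite ltn_neqAle eq_sym jn ji.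
  case: j ji jn => // j ji jn ij /=; rewrite subSn //= nth_drop; congr nth; lia.
have tkk1 : nth 0 t k.-1 <= nth 0 t k.+1 by apply: ht; lia.
have tk1k : nth 0 t k.-1 <= nth 0 t k by apply: ht; lia.
have tkk2 : nth 0 t k <= nth 0 t k.+1 by apply: ht; lia.
have xi : nth 0 (ins x t) i = x by rewrite nthu ltnn eqxx.
have V j : nth 0 (ins x t) j =
   if (j < i)%N then nth 0 t j else if j == i then x else nth 0 t j.-1 := nthu j.
have [ik|ki] := ltnP i k.
  have := hu i k (ltnW ik) ltac:(lia); rewrite xi => xle.
  have e1 : nth 0 (ins x t) k = nth 0 t k.-1.
    rewrite V; case: ltnP => ?; [lia|]; case: eqP => ?; [lia|done].
  have e2 : nth 0 (ins x t) k.+1 = nth 0 t k.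
    rewrite V; case: ltnP => ?; [lia|]; case: eqP => ?; [lia|done].
  by rewrite e1 e2 cl1 // -e1.
case: (ltngtP i k) ki => // [ki|ik] _; last first.
  subst i.
  have e0 : nth 0 (ins x t) k.-1 = nth 0 t k.-1.
    rewrite V; case: ltnP => ?; [done|lia].
  have e2 : nth 0 (ins x t) k.+1 = nth 0 t k.
    rewrite V; case: ltnP => ?; [lia|]; case: eqP => ?; [lia|done].
  have h1 := hu k.-1 k ltac:(lia) ltac:(lia).
  have h2 := hu k k.+1 ltac:(lia) ltac:(lia).
  rewrite xi e0 in h1; rewrite xi e2 in h2; rewrite xi e2.
  by rewrite cl2 //; apply: le_trans tkk2.
have [ik1|ik2] := eqVneq i k.+1.
  subst i.
  have e1 : nth 0 (ins x t) k = nth 0 t k.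
    rewrite V; case: ltnP => ?; [done|lia].
  have e3 : nth 0 (ins x t) k.+2 = nth 0 t k.+1.
    rewrite V; case: ltnP => ?; [lia|]; case: eqP => ?; [lia|done].
  have h1 := hu k k.+1 ltac:(lia) ltac:(lia).
  have h2 := hu k.+1 k.+2 ltac:(lia) ltac:(lia).
  rewrite xi e1 in h1 h2; rewrite e3 in h2.
  rewrite e1 xi cl2 1?[LHS]addrC //; exact: le_trans tk1k h1.
have h1 : nth 0 t k.+1 <= x.
  have := hu k.+1 i ltac:(lia) ltac:(lia).
  rewrite xi V; case: ltnP => ?; [done|lia].
have e1 : nth 0 (ins x t) k = nth 0 t k.
  rewrite V; case: ltnP => ?; [done|lia].
have e2 : nth 0 (ins x t) k.+1 = nth 0 t k.+1.
  rewrite V; case: ltnP => ?; [done|lia].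
by rewrite e1 e2 cl3 // addrC.
Qed.

End Aux.

Theorem mainTheorem5 (R : realType) (B : R) (n : nat) (s : seq R) :
  (3 <= n)%N -> odd n -> size s = n ->
  (forall x, x \in s -> 0 <= x <= B) ->
  let m := (n.+1 %/ 2)%N in
  RS_median B s =
    (Num.max (order_stat s m.+1 - order_stat s m)
             (order_stat s m - order_stat s m.-1)) / 2.
Proof.
move=> n3 on sz hs m.
set k := n./2.
have hn : n = k.*2.+1 by rewrite -{1}(odd_double_half n) on add1n.
have hm : m = k.+1 by rewrite /m hn -doubleS -muln2 mulnK.
set t := sort <=%R s.
have st : sorted <=%R t by apply: sort_sorted; exact: le_total.
have szt : size t = k.*2.+1 by rewrite size_sort sz.
have k0 : (0 < k)%N by move: n3; rewrite hn; case: (k) => //.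
have ht j : (j < k.*2.+1)%N -> 0 <= nth 0 t j <= B.
  by move=> hj; apply: hs; rewrite -(mem_sort <=%R) mem_nth // szt.
have medS : median s = nth 0 t k.
  by rewrite /median sz on /order_stat uphalf_half on.
have medX x : median (x :: s) =
    (@clamp R (nth 0 t k.-1) (nth 0 t k.+1) x + nth 0 t k) / 2.
  rewrite /median /= sz hn /=.
  rewrite odd_double doubleK /order_stat /=.
  by rewrite sort_cons -/t med_ins.
rewrite hm /order_stat /= -/t.
have t1 : nth 0 t k.-1 <= nth 0 t k.
  apply: (sorted_leq_nth le_trans le_refl) => //=; rewrite ?unfold_in /= ?szt; lia.
have t2 : nth 0 t k <= nth 0 t k.+1.
  apply: (sorted_leq_nth le_trans le_refl) => //=; rewrite ?unfold_in /= ?szt; lia.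
set a := nth 0 t k.-1; set b := nth 0 t k; set c := nth 0 t k.+1.
move: t1 t2; rewrite -/a -/b -/c => t1 t2.
have ub : ubound [set `|median (x :: s) - median s| | x in [set x : R | 0 <= x <= B]]
   (Num.max (c - b) (b - a) / 2).
  move=> y [x _ <-]; rewrite medX medS -/a -/b -/c.
  have c1 := @clamp_ge R a c x.
  have c2 := @clamp_le R a c x (le_trans t1 t2).
  have m1 : c - b <= Num.max (c - b) (b - a) by rewrite le_max lexx.
  have m2 : b - a <= Num.max (c - b) (b - a) by rewrite le_max lexx orbT.
  rewrite ler_norml; apply/andP; split; lra.
apply/le_anti/andP; split.
  apply: ge_sup => //.
  exists (`|median (b :: s) - median s|); exists b => //; apply: ht; lia.
apply: (ub_le_sup (ex_intro _ _ ub)).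
have [ge|lt] := leP (b - a) (c - b).
  exists c; first by apply: ht; lia.
  rewrite medX medS -/a -/b -/c cl3 //; last exact: le_trans t1 t2.
  rewrite ger0_norm; lra.
exists a; first by apply: ht; lia.
rewrite medX medS -/a -/b -/c cl1 //; last exact: le_trans t1 t2.
rewrite ler0_norm; lra.
Qed.
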